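(* Let $\sigma$ be the morphism on the four-letter alphabet $\{1,1^*,2,2^*\}$ given by $1\to 2$, $1^*\to 2^*$, $2\to 1^*2^*$, $2^*\to 21$. Then $\sigma^3(2^* )$ begins with $2^*$, and the infinite sequence $\mathbf u=\lim_{n\to\infty}\sigma^{3n}(2^* )$ is not $q$-automatic for any $q\ge 2$. More precisely, $\mathbf u$ is a concatenation of the blocks $A=2^*2$ and $B=11^*$, and the resulting sequence over $\{A,B\}$ is the fixed point of the morphism $A\to ABABA$, $B\to ABA$, which is a Sturmian sequence.
   Context: A Sturmian sequence is an infinite sequence over a two-letter alphabet having exactly $n+1$ distinct factors of length $n$ for every $n\ge0$. For an integer $q\ge 2$, a sequence is $q$-automatic if it is the image under a letter-to-letter map of a fixed point of a morphism all of whose letter-images have length $q$. *)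

(* Defs.v *)
From HB Require Import structures.
From mathcomp Require Import all_boot.

Set Implicit Arguments.
Unset Strict Implicit.
Unset Printing Implicit Defensive.

Inductive letter := L1 | L1s | L2 | L2s.

Definition letter_to_nat (x : letter) : nat :=
  match x with L1 => 0 | L1s => 1 | L2 => 2 | L2s => 3 end.
Definition nat_to_letter (n : nat) : option letter :=
  match n with 0 => Some L1 | 1 => Some L1s | 2 => Some L2 | 3 => Some L2s | _ => None end.
Lemma letter_natK : pcancel letter_to_nat nat_to_letter. Proof. by case. Qed.
HB.instance Definition _ := Equality.copy letter (pcan_type letter_natK).

Inductive AB := A | B.
Definition AB_to_bool (x : AB) : bool := if x is A then true else false.
Definition bool_to_AB (b : bool) : AB := if b then A else B.
Lemma AB_boolK : cancel AB_to_bool bool_to_AB. Proof. by case. Qed.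
HB.instance Definition _ := Equality.copy AB (can_type AB_boolK).

Definition morph_word (T U : Type) (phi : T -> seq U) (w : seq T) : seq U :=
  flatten (map phi w).

Definition prefix_of (T : Type) (s : seq T) (u : nat -> T) : Prop :=
  s = mkseq u (size s).

(** [u] is a fixed point of the morphism [phi]: phi(u) = u, i.e. the image of
    every finite prefix of [u] is a prefix of [u]. *)
Definition fixed_point (T : Type) (phi : T -> seq T) (u : nat -> T) : Prop :=
  forall n, prefix_of (morph_word phi (mkseq u n)) u.

Definition sigma (x : letter) : seq letter :=
  match x with
  | L1 => [:: L2]
  | L1s => [:: L2s]
  | L2 => [:: L1s; L2s]
  | L2s => [:: L2; L1]
  end.

Definition limit_of (T : Type) (w : nat -> seq T) (u : nat -> T) : Prop :=
  (forall n, prefix_of (w n) u) /\ (forall m, exists n, m <= size (w n)).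

Definition sigma3n_2s (n : nat) : seq letter := iter (3 * n) (morph_word sigma) [:: L2s].

Definition automatic (T : Type) (q : nat) (u : nat -> T) : Prop :=
  exists (C : finType) (phi : C -> seq C) (h : C -> T) (w : nat -> C),
    (forall c, size (phi c) = q) /\ fixed_point phi w /\ (forall n, u n = h (w n)).

Definition factor (T : Type) (u : nat -> T) (i n : nat) : seq T :=
  mkseq (fun j => u (i + j)) n.

Definition sturmian (u : nat -> AB) : Prop :=
  forall n, exists s : seq (seq AB),
    uniq s /\ size s = n.+1 /\
    (forall w, w \in s <-> exists i, w = factor u i n).

Definition block (x : AB) : seq letter :=
  match x with A => [:: L2s; L2] | B => [:: L1; L1s] end.

Definition block_concat (u : nat -> letter) (v : nat -> AB) : Prop :=
  forall n, prefix_of (morph_word block (mkseq v n)) u.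

Definition tau (x : AB) : seq AB :=
  match x with A => [:: A; B; A; B; A] | B => [:: A; B; A] end.

(* Main.v *)
From Stdlib Require Import Reals Lra Psatz ClassicalEpsilon Classical.
Require Import Defs.
From mathcomp Require Import all_boot zify.
Set Implicit Arguments.
Unset Strict Implicit.


Lemma sq5 x y : 0 < y -> x * x <> 5 * (y * y).
Proof.
move=> y0 E.
have x0 : 0 < x.
  case: x E => [|x] E //; have : 0 < 5 * (y * y) by rewrite !muln_gt0 y0.
  by rewrite -E.
have l5 : logn 5 5 = 1 by [].
have := congr1 (logn 5) E.
rewrite lognM // lognM ?muln_gt0 ?y0 // lognM // l5; lia.
Qed.

Section Reals1.
Local Open Scope R_scope.

Lemma INRD m n : INR (m + n)%N = INR m + INR n.
Proof. exact: plus_INR. Qed.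
Lemma INRM m n : INR (m * n)%N = INR m * INR n.
Proof. exact: mult_INR. Qed.
Lemma INRlt m n : (m < n)%N -> INR m < INR n.
Proof. by move/ltP; apply: lt_INR. Qed.
Lemma INRle m n : (m <= n)%N -> INR m <= INR n.
Proof. by move/leP; apply: le_INR. Qed.
Lemma INRlt_inv m n : INR m < INR n -> (m < n)%N.
Proof. by move/INR_lt/ltP. Qed.
Lemma INRle_inv m n : INR m <= INR n -> (m <= n)%N.
Proof. by move/INR_le/leP. Qed.
Lemma INReq m n : INR m = INR n -> m = n.
Proof. exact: INR_eq. Qed.
Lemma INR0' n : 0 <= INR n.
Proof. exact: pos_INR. Qed.

Lemma INR5 : INR 5 = 5.
Proof. simpl; lra. Qed.

Definition s5 : R := sqrt 5.
Lemma s5sq : s5 * s5 = 5.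
Proof. rewrite /s5 sqrt_sqrt //; lra. Qed.
Lemma s5pos : 0 < s5.
Proof. apply: sqrt_lt_R0; lra. Qed.
Lemma s5b : 2236/1000 < s5 < 2237/1000.
Proof. have := s5sq; have := s5pos; split; nra. Qed.

Lemma s5irr x y : (0 < y)%N -> INR y * s5 <> INR x.
Proof.
move=> y0 E; case: (@sq5 x y y0); apply: INReq.
rewrite !INRM -E INR5.
have := s5sq; nra.
Qed.

Definition bet : R := (s5 - 1) / 2.

Definition F (n : nat) : nat := ((Nat.sqrt (5 * n * n) + 1 - n) %/ 2)%N.

Lemma Fbounds n : INR (F n) - 1/2 < INR n * bet < INR (F n) + 1/2.
Proof.
case: (posnP n) => [->|n0].
  rewrite /F /=; lra.
have [s1 s2] := Nat.sqrt_spec (5 * n * n) (Nat.le_0_l _).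
set r := Nat.sqrt (5 * n * n) in s1 s2 *.
have {}s1 : (r * r <= 5 * n * n)%N by apply/leP.
have {}s2 : (5 * n * n < r.+1 * r.+1)%N by apply/ltP.
have s1' : (r * r < 5 * (n * n))%N.
  rewrite ltn_neqAle mulnA s1 andbT; apply/eqP => E.
  by apply: (@sq5 r n n0); rewrite E mulnA.
have R1 : INR r < INR n * s5.
  have := INRlt s1'; rewrite !INRM INR5.
  have := s5sq; have := s5pos; have := INR0' r; have := INR0' n => h1 h2 h3 h4 h5.
  have h6 : 0 <= INR n * s5 by nra.
  nra.
have R2 : INR n * s5 < INR r + 1.
  have := INRlt s2; rewrite !INRM -(addn1 r) INRD INR5 (_ : INR 1 = 1) //.
  have := s5sq; have := s5pos; have := INR0' r; have := INR0' n => h1 h2 h3 h4 h5.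
  have h6 : 0 <= INR n * s5 by nra.
  nra.
have b := s5b.
have rn : (2 * n < r + 1)%N.
  apply: INRlt_inv; rewrite INRM INRD (_ : INR 2 = 2) // (_ : INR 1 = 1) //.
  have := INR0' n; nra.
have e1 : (2 * F n <= r + 1 - n)%N.
  rewrite /F; have := leq_trunc_div (r + 1 - n) 2; rewrite mulnC; done.
have e2 : (r + 1 - n <= 2 * F n + 1)%N.
  rewrite /F; have := ltn_ceil (r + 1 - n) (isT : (0 < 2)%N); rewrite mulnC; lia.
have e1' : 2 * INR (F n) + INR n <= INR r + 1.
  have := INRle (_ : (2 * F n + n <= r + 1)%N); rewrite INRD INRM INRD; simpl.
  by move=> h; have := h ltac:(lia); lra.
have e2' : INR r <= 2 * INR (F n) + INR n.
  have := INRle (_ : (r <= 2 * F n + n)%N); rewrite INRD INRM; simpl.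
  by move=> h; have := h ltac:(lia); lra.
rewrite /bet; split; lra.
Qed.


Lemma INR1' : INR 1 = 1. Proof. by []. Qed.
Lemma INR2' : INR 2 = 2. Proof. simpl; lra. Qed.

Lemma Fchar n k : INR k - 1/2 < INR n * bet < INR k + 1/2 -> F n = k.
Proof.
move=> [h1 h2]; have [f1 f2] := Fbounds n.
apply/eqP; rewrite eqn_leq; apply/andP; split.
  rewrite -ltnS; apply: INRlt_inv; rewrite -addn1 INRD INR1'; lra.
rewrite -ltnS; apply: INRlt_inv; rewrite -addn1 INRD INR1'; lra.
Qed.

Lemma betb : 618/1000 < bet < 6185/10000.
Proof. have := s5b; rewrite /bet; lra. Qed.
Lemma betsq : bet * bet = 1 - bet.
Proof. have := s5sq; rewrite /bet; nra. Qed.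

Lemma Fstep n : (F n <= F n.+1 <= (F n).+1)%N.
Proof.
have [f1 f2] := Fbounds n; have [g1 g2] := Fbounds n.+1.
have := betb => hb; rewrite S_INR in g1 g2.
apply/andP; split.
  rewrite -ltnS; apply: INRlt_inv; rewrite S_INR; nra.
rewrite -ltnS; apply: INRlt_inv; rewrite !S_INR; nra.
Qed.

Lemma Ftau n : let l := (3 * n + 2 * F n)%N in
  [/\ F l = (2 * n + F n)%N, F (l + 1) = (2 * n + F n + 1)%N,
      F (l + 2) = (2 * n + F n + 1)%N, F (l + 3) = (2 * n + F n + 2)%N
    & F n.+1 = (F n).+1 -> F (l + 4) = (2 * n + F n + 2)%N].
Proof.
move=> l.
have [f1 f2] := Fbounds n.
set E := INR n * bet - INR (F n).
have hb := betb; have hs := s5b.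
have key : forall j, INR (l + j) * bet = INR (2 * n + F n) + E * (1 - 2 * bet) + INR j * bet.
  move=> j; rewrite /l /E !INRD (_ : INR 0 = 0) //.
  have := betsq => bb.
  have h : INR n * (bet * bet) = INR n * (1 - bet) by rewrite bb.
  have h2 : INR (F n) * bet = INR n * (bet * bet) - E * bet by rewrite /E; ring.
  rewrite /E in h2; lra.
have wb : 1/2 - bet < E * (1 - 2 * bet) < bet - 1/2.
  have e1 : - (1/2) < E < 1/2 by rewrite /E; lra.
  have e2 : 1 - 2 * bet < 0 by lra.
  split; nra.
have ch : forall j k, INR k - 1/2 < INR (2 * n + F n) + E * (1 - 2 * bet) + INR j * bet < INR k + 1/2 -> F (l + j) = k.
  by move=> j k h; apply: Fchar; rewrite key.
have I3 : INR 3 = 3 by simpl; lra.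
have I4 : INR 4 = 4 by simpl; lra.
split.
- by rewrite -(addn0 l); apply: ch; rewrite (_ : INR 0 = 0) //; lra.
- apply: (ch 1%N); rewrite INRD INR1'; lra.
- apply: (ch 2%N); rewrite INRD INR1' INR2'; lra.
- apply: (ch 3%N); rewrite INRD INR2' I3; lra.
move=> hA.
have [g1 g2] := Fbounds n.+1.
rewrite hA !S_INR in g1.
have hE : E > 1/2 - bet by rewrite /E; lra.
have hw : E * (1 - 2 * bet) < (1/2 - bet) * (1 - 2 * bet) by nra.
apply: (ch 4%N); rewrite INRD INR2' I4; split; [lra|].
have := s5sq; rewrite /bet in hw *; nra.
Qed.

End Reals1.


Lemma morph_cat (T U : Type) (phi : T -> seq U) s1 s2 :
  morph_word phi (s1 ++ s2) = morph_word phi s1 ++ morph_word phi s2.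
Proof. by rewrite /morph_word map_cat flatten_cat. Qed.
Lemma morph_rcons (T U : Type) (phi : T -> seq U) s x :
  morph_word phi (rcons s x) = morph_word phi s ++ phi x.
Proof. by rewrite /morph_word map_rcons flatten_rcons. Qed.
Lemma morph_cons (T U : Type) (phi : T -> seq U) s x :
  morph_word phi (x :: s) = phi x ++ morph_word phi s.
Proof. by []. Qed.
Lemma morph_nil (T U : Type) (phi : T -> seq U) : morph_word phi [::] = [::].
Proof. by []. Qed.

Lemma mkseq_add (T : Type) (f : nat -> T) a b :
  mkseq f (a + b) = mkseq f a ++ mkseq (fun j => f (a + j)) b.
Proof.
by rewrite /mkseq iotaD map_cat add0n -(addn0 a) iotaDl -map_comp addn0.
Qed.

Definition v (n : nat) : AB := if F n.+1 == (F n).+1 then A else B.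

Lemma vA m k : F m = k -> F (m + 1) = (k + 1)%N -> v m = A.
Proof. by move=> h1 h2; rewrite /v -[m.+1]addn1 h2 h1 addn1 eqxx. Qed.
Lemma vB m k : F m = k -> F (m + 1) = k -> v m = B.
Proof. move=> h1 h2; rewrite /v -[m.+1]addn1 h2 h1 (_ : (k == k.+1) = false) //; apply/eqP; lia. Qed.

Definition ell n := (3 * n + 2 * F n)%N.

Lemma v_tau n : morph_word tau (mkseq v n) = mkseq v (ell n).
Proof.
elim: n => [|n IH]; first by rewrite /ell /F.
rewrite mkseqS morph_rcons IH.
have [h0 h1 h2 h3 h4] := Ftau n.
have [h0' _ _ _ _] := Ftau n.+1.
rewrite -/(ell n) in h0 h1 h2 h3 h4; rewrite -/(ell n.+1) in h0'.
have := Fstep n; case/andP=> hs1 hs2.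
case: (boolP (F n.+1 == (F n).+1)) => hc; rewrite [v n]/v ?(negbTE hc) ?hc.
  move/eqP: hc => hA.
  have e : ell n.+1 = (ell n + 5)%N by rewrite /ell hA; lia.
  rewrite e mkseq_add; congr (_ ++ _).
  have hl5 : F (ell n + 5) = (2 * n + F n + 3)%N by rewrite -e h0' hA; lia.
  have h4' := h4 hA.
  rewrite /mkseq /=.
  rewrite addn0 (@vA _ (2 * n + F n)) //.
  rewrite (@vB (ell n + 1) (2 * n + F n + 1)) //; last by rewrite (_ : (ell n + 1 + 1 = ell n + 2)%N) ?h2 //; lia.
  rewrite (@vA (ell n + 2) (2 * n + F n + 1)) //; last by rewrite (_ : (ell n + 2 + 1 = ell n + 3)%N) ?h3 //; lia.
  rewrite (@vB (ell n + 3) (2 * n + F n + 2)) //; last by rewrite (_ : (ell n + 3 + 1 = ell n + 4)%N) ?h4' //; lia.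
  rewrite (@vA (ell n + 4) (2 * n + F n + 2)) //; last by rewrite (_ : (ell n + 4 + 1 = ell n + 5)%N) ?hl5 //; lia.
have hB' : F n.+1 = F n by move/eqP: hc; lia.
have e : ell n.+1 = (ell n + 3)%N by rewrite /ell hB'; lia.
rewrite e mkseq_add; congr (_ ++ _).
rewrite /mkseq /=.
rewrite addn0 (@vA _ (2 * n + F n)) //.
rewrite (@vB (ell n + 1) (2 * n + F n + 1)) //; last by rewrite (_ : (ell n + 1 + 1 = ell n + 2)%N) ?h2 //; lia.
rewrite (@vA (ell n + 2) (2 * n + F n + 1)) //; last by rewrite (_ : (ell n + 2 + 1 = ell n + 3)%N) ?h3 //; lia.
Qed.

Lemma fp_tau : fixed_point tau v.
Proof. by move=> n; rewrite /prefix_of v_tau size_mkseq. Qed.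

Lemma iter_morph_cat (T : Type) (phi : T -> seq T) k s1 s2 :
  iter k (morph_word phi) (s1 ++ s2) =
  iter k (morph_word phi) s1 ++ iter k (morph_word phi) s2.
Proof. by elim: k => //= k ->; rewrite morph_cat. Qed.

Lemma sig3_blockw w :
  iter 3 (morph_word sigma) (morph_word block w) = morph_word block (morph_word tau w).
Proof.
elim: w => // x w IH.
rewrite !morph_cons iter_morph_cat IH morph_cat; congr (_ ++ _); by case: x.
Qed.

Lemma sig3n n : iter (3 * n) (morph_word sigma) (morph_word block [:: A]) =
  morph_word block (iter n (morph_word tau) [:: A]).
Proof.
elim: n => // n IH.
by rewrite mulnS iterD IH sig3_blockw iterS.
Qed.

Lemma v0 : v 0 = A. Proof. by vm_compute. Qed.
Lemma v1 : v 1 = B. Proof. by vm_compute. Qed.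

Lemma tau_prefix n : exists m, iter n (morph_word tau) [:: A] = mkseq v m.
Proof.
elim: n => [|n [m IH]]; first by exists 1%N; rewrite /mkseq /= v0.
by exists (ell m); rewrite iterS IH v_tau.
Qed.

Definition ub (i : nat) : letter := nth L1 (block (v i./2)) (odd i).

Lemma block_ub m : morph_word block (mkseq v m) = mkseq ub (2 * m).
Proof.
elim: m => // m IH.
rewrite mkseqS morph_rcons IH mulnS addnC mkseq_add; congr (_ ++ _).
rewrite /mkseq /= /ub addn0 addn1 mul2n /= odd_double doubleK uphalf_double.
by case: (v m).
Qed.

Lemma prefix_cat (T : Type) (f : nat -> T) s t M :
  s ++ t = mkseq f M -> s = mkseq f (size s).
Proof.
move=> E.
have hM : M = (size s + (M - size s))%N.
  have := congr1 size E; rewrite size_cat size_mkseq; lia.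
move: E; rewrite hM mkseq_add => E.
have := congr1 (take (size s)) E.
by rewrite take_size_cat // take_size_cat // size_mkseq.
Qed.

Lemma size_morph_sig w : (size w <= size (morph_word sigma w))%N.
Proof. elim: w => // x w IH; rewrite morph_cons size_cat; case: x => /=; lia. Qed.

Lemma size_morph_sig2 w : (2 * size w <= size (iter 2 (morph_word sigma) w))%N.
Proof.
elim: w => // x w IH.
rewrite -cat1s iter_morph_cat size_cat /=; case: x => /=; rewrite /= in IH; lia.
Qed.

Lemma size_sig3n n : (n < size (sigma3n_2s n))%N.
Proof.
elim: n => // n IH.
rewrite /sigma3n_2s mulnS iterD /= in IH *.
have h1 := size_morph_sig (morph_word sigma (morph_word sigma (iter (3 * n) (morph_word sigma) [:: L2s])))
.
have := size_morph_sig2 (iter (3 * n) (morph_word sigma) [:: L2s]); rewrite /=.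
move: IH h1; rewrite /sigma3n_2s; lia.
Qed.

Lemma sig3n_prefix n : prefix_of (sigma3n_2s n) ub.
Proof.
have [m hm] := tau_prefix n.
have := sig3n n; rewrite hm block_ub.
rewrite (_ : morph_word block [:: A] = [:: L2s] ++ [:: L2]) // iter_morph_cat.
by move/prefix_cat.
Qed.

Lemma limit_ub : limit_of sigma3n_2s ub.
Proof.
split; first exact: sig3n_prefix.
by move=> m; exists m; apply: ltnW; apply: size_sig3n.
Qed.

Lemma limit_uniq u : limit_of sigma3n_2s u -> forall i, u i = ub i.
Proof.
case=> h1 h2 i.
have [n hn] := h2 i.+1.
have e1 := h1 n; have e2 := sig3n_prefix n.
rewrite /prefix_of in e1 e2.
have := congr1 (fun s => nth L1 s i) e1; have := congr1 (fun s => nth L1 s i) e2.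
by rewrite /= !nth_mkseq // => -> .
Qed.

Lemma block_concat_ub : block_concat ub v.
Proof. by move=> n; rewrite /prefix_of block_ub size_mkseq. Qed.


Definition dcd (P : Prop) : bool := if excluded_middle_informative P then true else false.
Lemma dcdP (P : Prop) : reflect P (dcd P).
Proof. by rewrite /dcd; case: excluded_middle_informative => h; constructor. Qed.

Lemma pigeon (T : eqType) (L : seq T) (f : nat -> T) :
  (forall k, f k \in L) -> exists i j, (i < j)%N /\ f i = f j.
Proof.
move=> hf.
set s := map f (iota 0 (size L).+1).
have : ~~ uniq s.
  apply/negP => us.
  have hsub : {subset s <= L} by move=> x /mapP [k _ ->].
  by have := uniq_leq_size us hsub; rewrite size_map size_iota ltnn.
case/(uniqPn (f 0)) => i [j [hij hj e]].
exists i, j; split => //.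
move: e; rewrite size_map size_iota in hj.
by rewrite !(nth_map 0) ?size_iota ?(ltn_trans hij) // !nth_iota ?(ltn_trans hij).
Qed.

Section Reals3.
Local Open Scope R_scope.

Lemma zero_bounded x b : (forall m, Rabs (INR m * x) < b) -> x = 0.
Proof.
move=> h; apply: NNPP => hx.
have hx' : 0 < Rabs x by apply: Rabs_pos_lt.
have [m hm] := INR_archimed (Rabs x) b hx'.
have := h m; rewrite Rabs_mult Rabs_pos_eq; [lra|apply: pos_INR].
Qed.

Lemma bal_F i j n : (F (i + n) + F j <= F (j + n) + F i + 1)%N.
Proof.
rewrite -ltnS; apply: INRlt_inv.
have [a1 a2] := Fbounds (i + n); have [b1 b2] := Fbounds j.
have [c1 c2] := Fbounds (j + n); have [d1 d2] := Fbounds i.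
rewrite !INRD in a1 a2 c1 c2.
rewrite S_INR !INRD INR1'; lra.
Qed.

Lemma irr_bet p c : (0 < p)%N -> INR p * bet <> INR c.
Proof.
move=> p0 e; apply: (@s5irr (2 * c + p) p p0).
rewrite INRD INRM INR2' -e /bet; field.
Qed.

Lemma aper_F a p c : (0 < p)%N -> (forall m, F (a + m * p) = F a + m * c)%N -> False.
Proof.
move=> p0 h.
have : INR c - INR p * bet = 0.
  apply: (@zero_bounded _ 1) => m.
  have [a1 a2] := Fbounds (a + m * p); have [b1 b2] := Fbounds a.
  rewrite h !INRD !INRM in a1 a2.
  apply: Rabs_def1; lra.
move=> e; apply: (@irr_bet p c p0); lra.
Qed.

End Reals3.


Definition cntA (w : seq AB) := count (fun c => c == A) w.

Lemma factorS i n : factor v i n.+1 = rcons (factor v i n) (v (i + n)).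
Proof. by rewrite /factor mkseqS. Qed.

Lemma factor_cons i n : factor v i n.+1 = v i :: factor v i.+1 n.
Proof.
rewrite /factor; apply: (@eq_from_nth _ A); first by rewrite size_mkseq [RHS]/= size_mkseq.
rewrite size_mkseq => k hk.
rewrite nth_mkseq //; case: k hk => [|k] hk /=; first by rewrite addn0.
by rewrite nth_mkseq // addSnnS.
Qed.

Lemma cntA_factor i n : (cntA (factor v i n) + F i = F (i + n))%N.
Proof.
elim: n => [|n IH]; first by rewrite addn0.
rewrite factorS /cntA -cats1 count_cat /= addn0 -/(cntA _) addnS.
have := Fstep (i + n); rewrite [v (i + n)]/v.
have BA : (B == A) = false by [].
case: ifP => /eqP h; rewrite ?eqxx ?BA; lia.
Qed.

Definition isfac (w : seq AB) : bool := dcd (exists i, w = factor v i (size w)).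
Lemma isfacP w : reflect (exists i, w = factor v i (size w)) (isfac w).
Proof. exact: dcdP. Qed.

Lemma isfac_factor i n : isfac (factor v i n).
Proof. by apply/isfacP; exists i; rewrite size_mkseq. Qed.

Lemma isfac_rcons w c : isfac (rcons w c) -> isfac w.
Proof.
case/isfacP => i; rewrite size_rcons factorS => /rcons_inj [-> _].
exact: isfac_factor.
Qed.

Lemma isfac_cons w c : isfac (c :: w) -> isfac w.
Proof.
case/isfacP => i /=; rewrite factor_cons => -[_ ->].
exact: isfac_factor.
Qed.

Lemma balance x y : isfac x -> isfac y -> size x = size y -> (cntA x <= cntA y + 1)%N.
Proof.
case/isfacP => i ->; case/isfacP => j -> .
rewrite !size_mkseq => <-.
have h1 := cntA_factor i (size x); have h2 := cntA_factor j (size x).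
have := bal_F i j (size x); lia.
Qed.

Definition RS (w : seq AB) := isfac (rcons w A) && isfac (rcons w B).

Lemma cntA_ext w : cntA (A :: rcons w A) = (cntA w + 2)%N /\ cntA (B :: rcons w B) = cntA w.
Proof. by rewrite /cntA /= -!cats1 !count_cat /=; split; lia. Qed.

Lemma RS_uniq w w' : size w = size w' -> RS w -> RS w' -> w = w'.
Proof.
elim: w w' => [|a w1 IH] [|b w1'] //= [hs] /andP [h1 h2] /andP [h1' h2'].
have e : w1 = w1'.
  apply: IH => //; apply/andP; split.
  - exact: (@isfac_cons (rcons w1 A) a h1).
  - exact: (@isfac_cons (rcons w1 B) a h2).
  - exact: (@isfac_cons (rcons w1' A) b h1').
  - exact: (@isfac_cons (rcons w1' B) b h2').
subst w1'.
have [c1 c2] := cntA_ext w1.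
case: a b h1 h2 h1' h2' => [] [] //= h1 h2 h1' h2'.
  have := balance h1 h2'; move/(_ ltac:(by rewrite /= !size_rcons)); lia.
have := balance h1' h2; move/(_ ltac:(by rewrite /= !size_rcons)); lia.
Qed.


Lemma factor_shift x n : factor v x.+1 n = behead (factor v x n.+1).
Proof. by rewrite factor_cons. Qed.

Lemma aperiodic a p : (0 < p)%N -> ~ (forall k, v (a + k) = v (a + p + k)).
Proof.
move=> p0 per.
have vm : forall m t, v (a + m * p + t) = v (a + t).
  elim=> [|m IH] t; first by rewrite mul0n addn0.
  rewrite mulSnr (_ : (a + (m * p + p) + t = a + p + (m * p + t))%N); last by lia.
  by rewrite -per addnA IH.
have fm : forall m, factor v (a + m * p) p = factor v a p.
  by move=> m; apply: eq_mkseq => t; rewrite vm.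
apply: (@aper_F a p (cntA (factor v a p)) p0).
elim=> [|m IH]; first by rewrite !mul0n !addn0.
rewrite mulSnr addnA -cntA_factor fm IH.
lia.
Qed.

Lemma RS_exists n (L : seq (seq AB)) :
  (forall i, factor v i n \in L) -> exists w, size w = n /\ RS w.
Proof.
move=> hL; apply: NNPP => hno.
have det : forall i j, factor v i n = factor v j n -> v (i + n) = v (j + n).
  move=> i j e; apply: NNPP => hne; apply: hno.
  exists (factor v i n); split; first by rewrite size_mkseq.
  have f1 : isfac (rcons (factor v i n) (v (i + n))) by rewrite -factorS isfac_factor.
  have f2 : isfac (rcons (factor v i n) (v (j + n))) by rewrite e -factorS isfac_factor.
  rewrite /RS; move: hne f1 f2; case: (v (i + n)); case: (v (j + n)) => // _ f1 f2.
  - by rewrite f1 f2.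
  - by rewrite f1 f2.
have [i [j [hij e]]] := pigeon hL.
have ek : forall k, factor v (i + k) n = factor v (j + k) n.
  elim=> [|k IH]; first by rewrite !addn0.
  rewrite !addnS !factor_shift !factorS IH (det _ _ IH).
  done.
apply: (@aperiodic (i + n) (j - i)); first by rewrite subn_gt0.
move=> k.
have := det _ _ (ek k).
rewrite (_ : (i + n + (j - i) + k = j + k + n)%N); last by lia.
by rewrite (_ : (i + n + k = i + k + n)%N) //; lia.
Qed.

Fixpoint Fac (n : nat) : seq (seq AB) :=
  match n with
  | 0 => [:: [::]]
  | n'.+1 => [seq x <- [seq rcons w c | w <- Fac n', c <- [:: A; B]] | isfac x]
  end.

Lemma sumn_1f (T : Type) (f : T -> nat) (s : seq T) :
  sumn [seq (1 + f x)%N | x <- s] = (size s + sumn (map f s))%N.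
Proof. elim: s => //= x s ->; lia. Qed.

Lemma count_one (T : eqType) (P : pred T) (s : seq T) r :
  uniq s -> r \in s -> P r -> (forall x, x \in s -> P x -> x = r) -> count P s = 1%N.
Proof.
move=> us rs Pr hu.
rewrite (@eq_in_count _ _ (pred1 r)); first by rewrite count_uniq_mem // rs.
move=> x xs /=; apply/idP/eqP; first exact: hu.
by move=> ->.
Qed.

Lemma Fac_spec n :
  [/\ uniq (Fac n), forall w, w \in Fac n = (size w == n) && isfac w & size (Fac n) = n.+1].
Proof.
elim: n => [|n [u mem sz]].
  split => //= w; rewrite inE; case: w => //=.
  by apply/esym/isfacP; exists 0%N.
have mem' : forall w, w \in Fac n.+1 = (size w == n.+1) && isfac w.
  move=> w /=; rewrite mem_filter.
  apply/andP/andP => [[hf /flatten_mapP [x hx hw]]|[/eqP hs hf]].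
    split => //; move: hx; rewrite mem => /andP [/eqP <- _].
    by move: hw; rewrite !inE => /orP [] /eqP ->; rewrite size_rcons.
  split => //; move: hs hf; case/lastP: w => [//|x c] hs hf.
  apply/flatten_mapP; exists x.
    have sx : size x = n by move: hs; rewrite size_rcons => -[].
    by rewrite mem sx eqxx (isfac_rcons hf).
  by clear hf hs; case: c; rewrite !inE eqxx ?orbT.
have ext : forall x, isfac x -> isfac (rcons x A) || isfac (rcons x B).
  move=> x /isfacP [i hi].
  have : isfac (rcons x (v (i + size x))) by rewrite {1}hi -factorS isfac_factor.
  by case: (v _) => ->; rewrite ?orbT.
have u' : uniq (Fac n.+1).
  rewrite /= filter_uniq //.
  have : uniq [seq rcons w c | w <- Fac n, c <- [:: A; B]].
    apply: allpairs_uniq => //.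
    by move=> [x c] [y d] _ _ /= /rcons_inj [-> ->].
  done.
split => //.
rewrite /= size_filter count_flatten -map_comp.
have hL : forall i, factor v i n \in Fac n by move=> i; rewrite mem size_mkseq eqxx isfac_factor.
have [r [hr1 hr2]] := RS_exists hL.
have -> : [seq (count isfac \o (fun w => [:: rcons w A; rcons w B])) i | i <- Fac n]
   = [seq (1 + RS x)%N | x <- Fac n].
  apply/eq_in_map => x; rewrite mem => /andP [_ hx] /=.
  rewrite /RS; move: (ext x hx); case: (isfac (rcons x A)); case: (isfac (rcons x B)) => //.
rewrite sumn_1f sz sumn_count (@count_one _ _ _ r) //.
- by rewrite addn1.
- by rewrite mem hr1 eqxx; case/andP: hr2 => /isfac_rcons.
- move=> x; rewrite mem => /andP [/eqP sx _] rx; apply: RS_uniq => //; by rewrite sx hr1.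
Qed.

Lemma sturm_v : sturmian v.
Proof.
move=> n; have [u mem sz] := Fac_spec n.
exists (Fac n); split => //; split => // w; rewrite mem.
split => [/andP [/eqP hs /isfacP [i hi]]|[i ->]].
  by exists i; rewrite hi hs.
by rewrite size_mkseq eqxx isfac_factor.
Qed.


Section RealRec.
Local Open Scope R_scope.

Lemma pow_ge_m b m : 2 <= b -> INR m <= b ^ m.
Proof.
move=> hb; elim: m => [|m IH]; first by simpl; lra.
have h1 : 1 <= b ^ m by apply: pow_R1_Rle; lra.
rewrite S_INR /=; nra.
Qed.

Lemma rec_lemma (g tau : nat -> R) (q : R) k1 p :
  (forall k, g k.+1 = q * g k + tau k) ->
  (forall j, tau (k1 + p + j)%N = tau (k1 + j)%N) ->
  forall m, (q ^ p - 1) * g (k1 + m * p)%N + (g (k1 + p)%N - q ^ p * g k1)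
            = (q ^ p) ^ m * (g (k1 + p)%N - g k1).
Proof.
move=> hg ht.
have tm : forall m j, tau (k1 + m * p + j)%N = tau (k1 + j)%N.
  elim=> [|m IH] j; first by rewrite mul0n addn0.
  rewrite mulSnr (_ : (k1 + (m * p + p) + j = k1 + p + (m * p + j))%N); last by lia.
  by rewrite ht addnA IH.
have hS : forall m j, g (k1 + m * p + j)%N - q ^ j * g (k1 + m * p)%N = g (k1 + j)%N - q ^ j * g k1.
  move=> m; elim=> [|j IH]; first by rewrite !addn0 /=; ring.
  rewrite !addnS !hg /= tm.
  rewrite (_ : q * g (k1 + m * p + j)%N + tau (k1 + j)%N - q * q ^ j * g (k1 + m * p)%N
    = q * (g (k1 + m * p + j)%N - q ^ j * g (k1 + m * p)%N) + tau (k1 + j)%N); last by ring.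
  rewrite IH; ring.
have step : forall m, g (k1 + m.+1 * p)%N = q ^ p * g (k1 + m * p)%N + (g (k1 + p)%N - q ^ p * g k1).
  move=> m; rewrite mulSnr addnA -(hS m p); ring.
elim=> [|m IH]; first by rewrite mul0n addn0 /=; ring.
rewrite step /=.
rewrite (_ : (q ^ p - 1) * (q ^ p * g (k1 + m * p)%N + (g (k1 + p)%N - q ^ p * g k1)) +
  (g (k1 + p)%N - q ^ p * g k1) = q ^ p * ((q ^ p - 1) * g (k1 + m * p)%N + (g (k1 + p)%N - q ^ p * g k1))); last by ring.
by rewrite IH; ring.
Qed.

End RealRec.

Definition cntw a L := count (fun i => ub i == L2s) (iota a L).
Definition Nf L := cntw 0 L.

Lemma cntw_add a L1 L2 : cntw a (L1 + L2) = (cntw a L1 + cntw (a + L1) L2)%N.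
Proof. by rewrite /cntw iotaD count_cat. Qed.

Lemma Nf_S L : Nf L.+1 = (Nf L + (ub L == L2s))%N.
Proof. by rewrite /Nf -addn1 cntw_add /cntw /= addn0. Qed.

Lemma Fv m : F m.+1 = (F m + (v m == A))%N.
Proof.
have := Fstep m; rewrite /v; case: ifP => /eqP h; rewrite ?eqxx /=; first lia.
have BA : (B == A) = false by []. rewrite ?BA; lia.
Qed.

Lemma Nf_formula m : Nf m.*2 = F m /\ Nf (m.*2).+1 = F m.+1.
Proof.
elim: m => [|m [IH1 IH2]]; first by split; [| rewrite Nf_S /ub /=; vm_compute].
have e1 : Nf (m.+1).*2 = F m.+1.
  rewrite doubleS Nf_S IH2 /ub /= uphalf_double.
  by rewrite odd_double; case: (v m) => /=; lia.
split => //.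
rewrite Nf_S e1 (Fv m.+1) /ub odd_double doubleK.
by case: (v m.+1).
Qed.

Section RealN.
Local Open Scope R_scope.
Lemma Nf_bound L : Rabs (INR (Nf L) - INR L * bet / 2) < 1.
Proof.
have hb := betb.
have eL := esym (odd_double_half L).
have [a1 a2] := Nf_formula L./2.
move: eL; case: (odd L) => /= eL; rewrite eL.
  rewrite add1n a2.
  have [f1 f2] := Fbounds L./2.+1.
  rewrite S_INR in f1 f2; rewrite S_INR -mul2n INRM INR2'.
  apply: Rabs_def1; lra.
rewrite add0n a1.
have [f1 f2] := Fbounds L./2.
rewrite -mul2n INRM INR2'.
apply: Rabs_def1; lra.
Qed.
End RealN.


Section R3s.
Local Open Scope R_scope.
Lemma INR3' : INR 3 = 3. Proof. simpl; lra. Qed.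
End R3s.

Lemma cntw_split a L m :
  cntw a (m * L) = sumn (mkseq (fun r => cntw (a + r * L) L) m).
Proof.
elim: m => [|m IH]; first by rewrite mul0n.
by rewrite mulSnr cntw_add IH mkseqS sumn_rcons.
Qed.

Section NonAuto.
Variables (q : nat) (C : finType) (phi : C -> seq C) (h : C -> letter) (w : nat -> C).
Hypotheses (hq : (2 <= q)%N) (hsz : forall c, size (phi c) = q)
  (hfp : fixed_point phi w) (hu : forall n, ub n = h (w n)).

Lemma size_morph_q s : size (morph_word phi s) = (q * size s)%N.
Proof. elim: s => [|x s IH]; first by rewrite muln0. by rewrite morph_cons size_cat hsz IH mulnS. Qed.

Lemma phi_w n : phi (w n) = mkseq (fun r => w (q * n + r)) q.
Proof.
have e := hfp n.+1; have e0 := hfp n.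
rewrite /prefix_of size_morph_q size_mkseq mkseqS morph_rcons in e.
rewrite /prefix_of size_morph_q size_mkseq in e0.
rewrite e0 mulnS addnC mkseq_add in e.
have := congr1 (drop (q * n)) e.
by rewrite !drop_size_cat ?size_mkseq.
Qed.

Fixpoint G (k : nat) (c : C) : nat :=
  if k is k'.+1 then sumn (map (G k') (phi c)) else nat_of_bool (h c == L2s).

Lemma G_w k n : G k (w n) = cntw (q ^ k * n) (q ^ k).
Proof.
elim: k n => [|k IH] n.
  by rewrite expn0 mul1n /cntw /= hu addn0.
rewrite /= phi_w /mkseq -map_comp expnS cntw_split /mkseq.
congr sumn; apply: eq_map => r /=.
rewrite IH; congr cntw; nia.
Qed.

Lemma G_w0 k : G k (w 0) = Nf (q ^ k).
Proof. by rewrite G_w muln0. Qed.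

Lemma Gb k n : (G k (w n) <= G k (w 0) + 3)%N /\ (G k (w 0) <= G k (w n) + 3)%N.
Proof.
rewrite G_w0 G_w.
set a := (q ^ k * n)%N; set L := (q ^ k)%N.
have e : (Nf (a + L) = Nf a + cntw a L)%N by rewrite /Nf cntw_add.
have b1 := Nf_bound (a + L); have b2 := Nf_bound a; have b3 := Nf_bound L.
have hb := betb.
apply Rabs_def2 in b1; apply Rabs_def2 in b2; apply Rabs_def2 in b3.
rewrite e INRD INRD in b1.
split; rewrite -ltnS; apply: INRlt_inv; rewrite ?S_INR !INRD INR3'; lra.
Qed.

Definition E k c := (G k c + 3 - G k (w 0))%N.
Definition occ c := dcd (exists n, w n = c).

Lemma occ_w n : occ (w n).
Proof. by apply/dcdP; exists n. Qed.

Lemma occ_phi c d : occ c -> d \in phi c -> occ d.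
Proof.
case/dcdP => n <-; rewrite phi_w => /mapP [r _ ->]; exact: occ_w.
Qed.

Lemma E_G k d : occ d -> (E k d + G k (w 0) = G k d + 3)%N.
Proof. case/dcdP => n <-; have := Gb k n; rewrite /E; lia. Qed.

Lemma E_le k d : occ d -> (E k d <= 6)%N.
Proof. case/dcdP => n <-; have := Gb k n; rewrite /E; lia. Qed.

Lemma E_sum k l : (forall d, d \in l -> occ d) ->
  (sumn (map (E k) l) + size l * G k (w 0) = sumn (map (G k) l) + size l * 3)%N.
Proof.
elim: l => //= d l IH hl.
have := E_G k (hl d (mem_head _ _)).
have := IH (fun x hx => hl x ltac:(by rewrite inE hx orbT)).
rewrite !mulSn; lia.
Qed.

Lemma E_rec k c : occ c ->
  (E k.+1 c + sumn (map (E k) (phi (w 0))) = sumn (map (E k) (phi c)) + 3)%N.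
Proof.
move=> oc.
have h1 := E_G k.+1 oc.
have h2 := E_sum k (fun d hd => occ_phi oc hd).
have h3 := E_sum k (fun d hd => occ_phi (occ_w 0) hd).
rewrite !hsz in h2 h3.
rewrite /= in h1.
move: h1 h2 h3; set X := (q * G k (w 0))%N; lia.
Qed.


Definition st k : {ffun C -> 'I_7} := [ffun c => inord (if occ c then E k c else 0)].

Lemma st_eq k1 k2 c : st k1 = st k2 -> occ c -> E k1 c = E k2 c.
Proof.
move=> e oc; have := congr1 (fun f : {ffun C -> 'I_7} => nat_of_ord (f c)) e.
by rewrite /st !ffunE oc !inordK // ltnS E_le.
Qed.

Lemma E_per k1 k2 : st k1 = st k2 -> forall j c, occ c -> E (k1 + j) c = E (k2 + j) c.
Proof.
move=> e; elim=> [|j IH] c oc; first by rewrite !addn0; apply: st_eq.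
have h1 := E_rec (k1 + j) oc; have h2 := E_rec (k2 + j) oc.
have s1 : sumn (map (E (k1 + j)) (phi c)) = sumn (map (E (k2 + j)) (phi c)).
  by congr sumn; apply/eq_in_map => d hd; apply: IH; exact: occ_phi oc hd.
have s0 : sumn (map (E (k1 + j)) (phi (w 0))) = sumn (map (E (k2 + j)) (phi (w 0))).
  by congr sumn; apply/eq_in_map => d hd; apply: IH; exact: occ_phi (occ_w 0) hd.
rewrite !addnS; lia.
Qed.


Local Open Scope R_scope.

Lemma INRX a b : INR (a ^ b)%N = INR a ^ b.
Proof. by elim: b => // b IH; rewrite expnS INRM IH. Qed.

Lemma no_auto : False.
Proof.
have [k1 [k2 [hk e]]] := @pigeon _ (enum {ffun C -> 'I_7}) st (fun k => ltac:(by rewrite mem_enum)).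
set p := (k2 - k1)%N.
have hp : (k1 + p)%N = k2 by rewrite /p subnKC // ltnW.
have p0 : (0 < p)%N by rewrite /p subn_gt0.
set g := fun k => INR (G k (w 0)).
set tau := fun k => INR (sumn (map (E k) (phi (w 0)))) - INR (q * 3).
have hg : forall k, g k.+1 = INR q * g k + tau k.
  move=> k; rewrite /g /tau.
  have := E_sum k (fun d hd => occ_phi (occ_w 0) hd); rewrite hsz => h1.
  have := congr1 INR h1; rewrite !INRD !INRM /= => h2.
  lra.
have ht : forall j, tau (k1 + p + j)%N = tau (k1 + j)%N.
  move=> j; rewrite /tau hp; congr (INR _ - _); congr sumn.
  apply/eq_in_map => d hd; symmetry; apply: E_per => //; exact: occ_phi (occ_w 0) hd.
have Rm := rec_lemma hg ht.
rewrite hp in Rm.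
have gb : forall k, Rabs (g k - INR (q ^ k) * bet / 2) < 1.
  by move=> k; rewrite /g G_w0; apply: Nf_bound.
set Qp := INR q ^ p.
have hQ : 2 <= Qp.
  have h2 : (2 <= q ^ p)%N.
    rewrite -(subnKC p0) expnS; have := expn_gt0 q (p - 1); rewrite (ltnW hq) /=.
    move=> hh; nia.
  by have := INRle h2; rewrite INRX INR2'.
set X := INR (q ^ k1).
set T := g k2 - Qp * g k1.
set z := (g k2 - g k1) - (Qp - 1) * X * bet / 2.
have hz : z = 0.
  apply: (@zero_bounded _ ((Qp - 1) + Rabs T)) => m.
  have Rm' := Rm m.
  have gm := gb (k1 + m * p)%N.
  have eX : INR (q ^ (k1 + m * p)) = X * Qp ^ m.
    by rewrite expnD (mulnC m p) expnM INRM /X /Qp !INRX.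
  rewrite eX in gm.
  have eq1 : Qp ^ m * z = (Qp - 1) * (g (k1 + m * p)%N - X * Qp ^ m * bet / 2) + T.
    rewrite /z /T; move: Rm'; rewrite -/Qp -/T => Rm'; nra.
  have ineq : Rabs (Qp ^ m * z) < (Qp - 1) + Rabs T.
    rewrite eq1; apply: Rle_lt_trans; first exact: Rabs_triang.
    rewrite Rabs_mult (Rabs_pos_eq (Qp - 1)); last lra.
    have : Rabs (g (k1 + m * p)%N - X * Qp ^ m * bet / 2) < 1.
      exact: gm.
    move=> hh; nra.
  apply: Rle_lt_trans ineq.
  rewrite !Rabs_mult (Rabs_pos_eq (INR m)) ?(Rabs_pos_eq (Qp ^ m)); try (apply: pos_INR).
    apply: Rmult_le_compat_r; [exact: Rabs_pos | exact: pow_ge_m].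
  apply: pow_le; lra.
have q1 : (1 <= q ^ p)%N by rewrite expn_gt0 (ltnW hq).
have q2 : (1 < q ^ p)%N.
  rewrite -(subnKC p0) expnS; have := expn_gt0 q (p - 1); rewrite (ltnW hq) /=.
  move=> hh; nia.
set y := ((q ^ p - 1) * q ^ k1)%N.
have y0 : (0 < y)%N by rewrite muln_gt0 subn_gt0 q2 expn_gt0 (ltnW hq).
have ey : INR y = (Qp - 1) * X.
  rewrite /y INRM /X; congr (_ * _).
  have := congr1 INR (subnK q1); rewrite INRD INRX /Qp; simpl INR; lra.
set G1 := G k2 (w 0); set G0 := G k1 (w 0).
have e1 : INR y * s5 + INR (4 * G0) = INR (4 * G1 + y).
  rewrite (INRD (4 * G1) y) ey !INRM; move: hz; rewrite /z /g -/G1 -/G0 /bet.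
  rewrite (_ : INR 4 = 4); last by simpl; lra.
  move=> hh; nra.
have le1 : (4 * G0 <= 4 * G1 + y)%N.
  apply: INRle_inv; rewrite -e1.
  have := INR0' y; have := s5pos; nra.
apply: (@s5irr (4 * G1 + y - 4 * G0) y y0).
have := congr1 INR (subnK le1); rewrite INRD -e1; lra.
Qed.

End NonAuto.


Theorem mainTheorem12 :
  (exists w, iter 3 (morph_word sigma) [:: L2s] = L2s :: w) /\
  (exists u, limit_of sigma3n_2s u) /\
  (forall u : nat -> letter, limit_of sigma3n_2s u ->
     (forall q, 2 <= q -> ~ automatic q u) /\
     (exists v : nat -> AB, block_concat u v /\ fixed_point tau v /\ sturmian v)).
Proof.
split; first by exists [:: L2; L1; L1s; L2s].
split; first by exists ub; exact: limit_ub.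
move=> u hl; have hu := limit_uniq hl.
split.
  move=> q hq [C [phi [h [w [hs [hfp hun]]]]]].
  apply: (@no_auto q C phi h w hq hs hfp) => n; by rewrite -hu hun.
exists v; split; last by split; [exact: fp_tau | exact: sturm_v].
move=> n; have := block_concat_ub n; rewrite /prefix_of => e; rewrite {1}e.
by apply: eq_mkseq => i; rewrite hu.
Qed.
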